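(* Let $\alpha_1,\alpha_2,\alpha_0,\beta_0$ be nonzero real constants with $\alpha_1\beta_0^2=\alpha_2\alpha_0^2$, and consider the lattice Schwarzian KdV equation for $u_{n,m}$, $(n,m)\in\mathbb{Z}^2$: $$\mathbb{Q}\equiv\alpha_1 (u_{n,m}-u_{n,m+1}-\beta_0)(u_{n+1,m}-u_{n+1,m+1}-\beta_0)-\alpha_2 (u_{n,m}-u_{n+1,m}-\alpha_0)(u_{n,m+1}-u_{n+1,m+1}-\alpha_0)=0.$$ Then the non-autonomous generator $G_{n,m}\,\partial_{u_{n,m}}$ with $$G_{n,m}=\frac{4n(u_{n,m}-u_{n-1,m}+\alpha_0)(u_{n,m}-u_{n+1,m}-\alpha_0)}{u_{n+1,m}-u_{n-1,m}+2\alpha_0}+\frac{4m(u_{n,m}-u_{n,m-1}+\beta_0)(u_{n,m}-u_{n,m+1}-\beta_0)}{u_{n,m+1}-u_{n,m-1}+2\beta_0}$$ is a generalized symmetry of $\mathbb{Q}=0$.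
   Context: A generator $G_{n,m}\partial_{u_{n,m}}$, where $G_{n,m}$ is a function of finitely many values $u_{n+i,m+j}$ (and possibly of $n,m$), and $G_{n+i,m+j}$ denotes the same expression with all indices shifted (including the explicit factors $n$, $m$, which become $n+i$, $m+j$), is called a generalized symmetry of $\mathbb{Q}(u_{n,m},u_{n+1,m},u_{n,m+1},u_{n+1,m+1})=0$ if $$G_{n,m}\frac{\partial \mathbb{Q}}{\partial u_{n,m}}+G_{n+1,m}\frac{\partial \mathbb{Q}}{\partial u_{n+1,m}}+G_{n,m+1}\frac{\partial \mathbb{Q}}{\partial u_{n,m+1}}+G_{n+1,m+1}\frac{\partial \mathbb{Q}}{\partial u_{n+1,m+1}}=0$$ at every $(n,m)$ for every solution $u$ of the lattice equation on $\mathbb{Z}^2$ for which all denominators involved are nonzero (equivalently, the expression vanishes modulo the equation and its shifts). *)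

(* Defs.v *)
From Stdlib Require Import Reals ZArith.
From Coquelicot Require Import Coquelicot.
Open Scope R_scope.

(* Q(u_{n,m}, u_{n+1,m}, u_{n,m+1}, u_{n+1,m+1}) for the lattice Schwarzian KdV *)
Definition Qsk (a1 a2 a0 b0 : R) (x y z w : R) : R :=
  a1 * (x - z - b0) * (y - w - b0) - a2 * (x - y - a0) * (z - w - a0).

Definition dQ1 a1 a2 a0 b0 x y z w := Derive (fun t => Qsk a1 a2 a0 b0 t y z w) x.
Definition dQ2 a1 a2 a0 b0 x y z w := Derive (fun t => Qsk a1 a2 a0 b0 x t z w) y.
Definition dQ3 a1 a2 a0 b0 x y z w := Derive (fun t => Qsk a1 a2 a0 b0 x y t w) z.
Definition dQ4 a1 a2 a0 b0 x y z w := Derive (fun t => Qsk a1 a2 a0 b0 x y z t) w.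

Definition denN (a0 : R) (u : Z -> Z -> R) (n m : Z) : R :=
  u (n + 1)%Z m - u (n - 1)%Z m + 2 * a0.
Definition denM (b0 : R) (u : Z -> Z -> R) (n m : Z) : R :=
  u n (m + 1)%Z - u n (m - 1)%Z + 2 * b0.

Definition Gsym (a0 b0 : R) (u : Z -> Z -> R) (n m : Z) : R :=
  4 * IZR n * (u n m - u (n - 1)%Z m + a0) * (u n m - u (n + 1)%Z m - a0)
    / denN a0 u n m
  + 4 * IZR m * (u n m - u n (m - 1)%Z + b0) * (u n m - u n (m + 1)%Z - b0)
    / denM b0 u n m.

(* Main.v *)
Require Import Defs.
From Stdlib Require Import Reals ZArith Lia Lra.
From Coquelicot Require Import Coquelicot.
Open Scope R_scope.

Definition Ecr (a1 a2 x y z w : R) : R := a1*(x-z)*(y-w) - a2*(x-y)*(z-w).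

Lemma symA (xl x y y2 zl z w w2 a1 a2 : R) :
  a2 <> 0 -> y - xl <> 0 -> y2 - x <> 0 -> w - zl <> 0 -> w2 - z <> 0 -> Ecr a1 a2 xl x zl z = 0 -> Ecr a1 a2 x y z w = 0 -> Ecr a1 a2 y y2 w w2 = 0 ->
  (x-xl)*(x-y)/(y - xl) * (a1*(y-w) - a2*(z-w)) + (y-x)*(y-y2)/(y2 - x) * (a1*(x-z) + a2*(z-w)) + (z-zl)*(z-w)/(w - zl) * (- a1*(y-w) - a2*(x-y)) + (w-z)*(w-w2)/(w2 - z) * (- a1*(x-z) + a2*(x-y)) = 0.
Proof.
  intros Hf Hd1 Hd2 Hd3 Hd4 He1 He2 He3.
  assert (HT : a2 * ((x-xl)*(x-y)*(a1*(y-w) - a2*(z-w))*(y2 - x)*(w - zl)*(w2 - z) + (y-x)*(y-y2)*(a1*(x-z) + a2*(z-w))*(y - xl)*(w - zl)*(w2 - z) + (z-zl)*(z-w)*(- a1*(y-w) - a2*(x-y))*(y - xl)*(y2 - x)*(w2 - z) + (w-z)*(w-w2)*(- a1*(x-z) + a2*(x-y))*(y - xl)*(y2 - x)*(w - zl)) = ((1)*y2*w^2*w2*a1 + (-2)*y*y2*w*w2*a1 + (-1)*y*y2*w^2*a2 + (-1)*y*y2*z*w2*a2 + (2)*y*y2*z*w*a2 + (1)*y^2*w*w2*a2 + (-1)*y^2*z*w*a2 + (1)*y^2*y2*w2*a1 + (-1)*x*w^2*w2*a1 + (1)*x*y2*w^2*a2 + (-1)*x*y2*w^2*a1 + (-1)*x*y2*z*w*a2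 + (-1)*x*y*w*w2*a2 + (2)*x*y*w*w2*a1 + (1)*x*y*w^2*a2 + (1)*x*y*z*w2*a2 + (-1)*x*y*z*w*a2 + (1)*x*y*y2*w2*a2 + (-1)*x*y*y2*w*a2 + (2)*x*y*y2*w*a1 + (-1)*x*y^2*w2*a2 + (-1)*x*y^2*w2*a1 + (1)*x*y^2*z*a2 + (-1)*x*y^2*y2*a1 + (-1)*x^2*w^2*a2 + (1)*x^2*w^2*a1 + (1)*x^2*z*w*a2 + (1)*x^2*y*w*a2 + (-2)*x^2*y*w*a1 + (-1)*x^2*y*z*a2 + (1)*x^2*y^2*a1 + (1)*xl*y2*z*w2*a2 + (-1)*xl*y2*z*w*a2 + (-1)*xl*y*w*w2*a2 + (1)*xl*y*z*w*a2 + (1)*xl*y*y2*w*a2 + (-1)*xl*y*y2*z*a2 + (1)*xl*x*w*w2*a2 + (-1)*xl*x*z*w2*a2 + (-1)*xl*x*y2*w2*a2 + (1)*xl*x*y2*z*a2 + (1)*xl*x*y*w2*a2 + (-1)*xl*x*y*w*a2)*(Ecr a1 a2 xl x zl z) + ((-1)*y2*zl*w*w2*a1 + (-2)*y*y2*w*w2*a2 + (1)*y*y2*w^2*a2 + (2)*y*y2*z*w2*a2 + (-1)*y*y2*z^2*a2 + (1)*y*y2*zl*w2*a2 + (1)*y*y2*zl*w2*a1 + (-1)*y*y2*zl*w*a2 + (1)*y^2*w*w2*a2 + (-1)*y^2*z*w2*a2 + (1)*y^2*z*w2*a1 + (-1)*y^2*zl*w2*a2 + (1)*y^2*zl*z*a2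 + (-1)*y^2*y2*z*a1 + (1)*x*zl*w*w2*a1 + (1)*x*y2*w*w2*a2 + (-1)*x*y2*zl*w2*a2 + (-1)*x*y2*zl*w*a2 + (1)*x*y2*zl*w*a1 + (1)*x*y2*zl*z*a2 + (1)*x*y*w*w2*a2 + (-1)*x*y*w^2*a2 + (-2)*x*y*z*w2*a2 + (1)*x*y*z^2*a2 + (1)*x*y*zl*w2*a2 + (-1)*x*y*zl*w2*a1 + (1)*x*y*zl*w*a2 + (-1)*x*y*zl*z*a2 + (-1)*x*y*y2*w2*a2 + (1)*x*y*y2*w*a2 + (-1)*x*y*y2*zl*a1 + (1)*x*y^2*w2*a2 + (-1)*x*y^2*w2*a1 + (-1)*x*y^2*w*a2 + (1)*x*y^2*y2*a1 + (-1)*x^2*w*w2*a2 + (1)*x^2*zl*w2*a2 + (1)*x^2*zl*w*a2 + (-1)*x^2*zl*w*a1 + (-1)*x^2*zl*z*a2 + (1)*x^2*y*z*a2 + (-1)*x^2*y*zl*a2 + (1)*x^2*y*zl*a1 + (1)*xl*y2*w*w2*a2 + (1)*xl*y2*w*w2*a1 + (-1)*xl*y2*w^2*a2 + (-2)*xl*y2*z*w2*a2 + (1)*xl*y2*z^2*a2 + (2)*xl*y2*zl*w*a2 + (-1)*xl*y2*zl*z*a2 + (-1)*xl*y*w*w2*a2 + (2)*xl*y*z*w2*a2 + (-2)*xl*y*z*w2*a1 + (-1)*xl*y*zl*z*a2 + (-1)*xl*y*y2*w2*a1 + (2)*xl*y*y2*z*a1 + (-1)*xl*x*w*w2*a1 +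 (1)*xl*x*w^2*a2 + (2)*xl*x*z*w2*a2 + (-1)*xl*x*z^2*a2 + (-2)*xl*x*zl*w2*a2 + (-2)*xl*x*zl*w*a2 + (2)*xl*x*zl*z*a2 + (1)*xl*x*y2*w2*a2 + (-1)*xl*x*y2*w*a2 + (-1)*xl*x*y2*w*a1 + (-1)*xl*x*y2*z*a2 + (1)*xl*x*y2*zl*a2 + (-1)*xl*x*y*w2*a2 + (3)*xl*x*y*w2*a1 + (1)*xl*x*y*w*a2 + (-1)*xl*x*y*z*a2 + (1)*xl*x*y*zl*a2 + (-1)*xl*x*y*y2*a1 + (1)*xl*x^2*w*a1 + (-1)*xl*x^2*y*a1 + (-1)*xl^2*z*w2*a2 + (1)*xl^2*z*w2*a1 + (1)*xl^2*zl*w2*a2 + (1)*xl^2*y2*z*a2 + (-1)*xl^2*y2*z*a1 + (-1)*xl^2*y2*zl*a2 + (-1)*xl^2*x*w2*a1 + (1)*xl^2*x*y2*a1)*(Ecr a1 a2 x y z w) + ((-1)*y^2*z*w*a2 + (1)*y^2*z^2*a2 + (-1)*y^2*z^2*a1 + (1)*x*y*z*w*a2 + (-1)*x*y*zl*z*a2 + (1)*x*y^2*w*a2 + (-1)*x*y^2*z*a2 + (2)*x*y^2*z*a1 + (-1)*x^2*y*w*a2 + (1)*x^2*y*zl*a2 + (-1)*x^2*y^2*a1 + (1)*xl*y*z*w*a2 + (-2)*xl*y*z^2*a2 + (2)*xl*y*z^2*a1 + (1)*xl*y*zl*z*a2 + (-1)*xl*x*z*w*a2 + (1)*xl*x*zl*z*a2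 + (-1)*xl*x*y*w*a2 + (2)*xl*x*y*z*a2 + (-4)*xl*x*y*z*a1 + (-1)*xl*x*y*zl*a2 + (1)*xl*x^2*w*a2 + (-1)*xl*x^2*zl*a2 + (2)*xl*x^2*y*a1 + (1)*xl^2*z^2*a2 + (-1)*xl^2*z^2*a1 + (-1)*xl^2*zl*z*a2 + (-1)*xl^2*x*z*a2 + (2)*xl^2*x*z*a1 + (1)*xl^2*x*zl*a2 + (-1)*xl^2*x^2*a1)*(Ecr a1 a2 y y2 w w2)) by (unfold Ecr; ring).
  rewrite He1, He2, He3 in HT.
  assert (HK : ((x-xl)*(x-y)/(y - xl) * (a1*(y-w) - a2*(z-w)) + (y-x)*(y-y2)/(y2 - x) * (a1*(x-z) + a2*(z-w)) + (z-zl)*(z-w)/(w - zl) * (- a1*(y-w) - a2*(x-y)) + (w-z)*(w-w2)/(w2 - z) * (- a1*(x-z) + a2*(x-y))) * (a2 * (y - xl)*(y2 - x)*(w - zl)*(w2 - z)) = a2 * ((x-xl)*(x-y)*(a1*(y-w) - a2*(z-w))*(y2 - x)*(w - zl)*(w2 - z) + (y-x)*(y-y2)*(a1*(x-z) + a2*(z-w))*(y - xl)*(w - zl)*(w2 - z) + (z-zl)*(z-w)*(- a1*(y-w) - a2*(x-y))*(y - xl)*(y2 - x)*(w2 - z) + (w-z)*(w-w2)*(- a1*(x-z) + a2*(x-y))*(y - xl)*(y2 - x)*(w - zl))) by (field; repeat split; assumption).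
  rewrite HT in HK.
  assert (Hnz : a2 * (y - xl)*(y2 - x)*(w - zl)*(w2 - z) <> 0) by (repeat (assumption || apply Rmult_integral_contrapositive_currified)).
  apply (Rmult_eq_reg_r (a2 * (y - xl)*(y2 - x)*(w - zl)*(w2 - z))); [|exact Hnz].
  rewrite HK; ring.
Qed.
Lemma symB (xb yb x y z w z2 w3 a1 a2 : R) :
  a1 <> 0 -> z - xb <> 0 -> w - yb <> 0 -> z2 - x <> 0 -> w3 - y <> 0 -> Ecr a1 a2 xb yb x y = 0 -> Ecr a1 a2 x y z w = 0 -> Ecr a1 a2 z w z2 w3 = 0 ->
  (x-xb)*(x-z)/(z - xb) * (a1*(y-w) - a2*(z-w)) + (y-yb)*(y-w)/(w - yb) * (a1*(x-z) + a2*(z-w)) + (z-x)*(z-z2)/(z2 - x) * (- a1*(y-w) - a2*(x-y)) + (w-y)*(w-w3)/(w3 - y) * (- a1*(x-z) + a2*(x-y)) = 0.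
Proof.
  intros Hf Hd1 Hd2 Hd3 Hd4 He1 He2 He3.
  assert (HT : a1 * ((x-xb)*(x-z)*(a1*(y-w) - a2*(z-w))*(w - yb)*(z2 - x)*(w3 - y) + (y-yb)*(y-w)*(a1*(x-z) + a2*(z-w))*(z - xb)*(z2 - x)*(w3 - y) + (z-x)*(z-z2)*(- a1*(y-w) - a2*(x-y))*(z - xb)*(w - yb)*(w3 - y) + (w-y)*(w-w3)*(- a1*(x-z) + a2*(x-y))*(z - xb)*(w - yb)*(z2 - x)) = ((1)*w^2*z2*w3*a2 + (-2)*z*w*z2*w3*a2 + (-1)*z*w^2*z2*a1 + (1)*z^2*z2*w3*a2 + (-1)*z^2*w*w3*a1 + (1)*y*z*w*w3*a2 + (1)*y*z*w*z2*a2 + (1)*y*z*w*z2*a1 + (-1)*y*z^2*w3*a2 + (1)*y*z^2*w3*a1 + (-1)*y*z^2*z2*a2 + (1)*y*z^2*w*a1 + (-1)*y^2*z*w*a2 + (1)*y^2*z^2*a2 + (-1)*y^2*z^2*a1 + (-1)*x*w^2*w3*a2 + (-1)*x*w^2*z2*a2 + (1)*x*w^2*z2*a1 + (1)*x*z*w*w3*a2 + (1)*x*z*w*w3*a1 + (1)*x*z*w*z2*a2 + (1)*x*z*w^2*a1 + (-1)*x*y*w*z2*a1 + (-1)*x*y*z*w3*a1 + (-2)*x*y*z*w*a1 + (1)*x*y^2*z*a1 + (1)*x^2*w^2*a2 + (-1)*x^2*w^2*a1 + (-1)*x^2*z*w*a2 + (1)*x^2*y*w*a1 + (1)*yb*z*w*z2*a1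 + (-1)*yb*y*w*z2*a2 + (1)*yb*y*z*z2*a2 + (-1)*yb*y*z*z2*a1 + (1)*yb*x*w*z2*a2 + (-1)*yb*x*w*z2*a1 + (-1)*yb*x*z*z2*a2 + (-1)*yb*x*z*w*a1 + (1)*yb*x*y*z2*a1 + (1)*yb*x*y*w*a2 + (-1)*yb*x*y*z*a2 + (1)*yb*x*y*z*a1 + (-1)*yb*x^2*w*a2 + (1)*yb*x^2*w*a1 + (1)*yb*x^2*z*a2 + (-1)*yb*x^2*y*a1 + (1)*xb*z*w*w3*a1 + (-1)*xb*y*w*w3*a2 + (1)*xb*y*z*w3*a2 + (-1)*xb*y*z*w3*a1 + (-1)*xb*y*z*w*a1 + (1)*xb*y^2*w*a2 + (-1)*xb*y^2*z*a2 + (1)*xb*y^2*z*a1 + (1)*xb*x*w*w3*a2 + (-1)*xb*x*w*w3*a1 + (-1)*xb*x*z*w3*a2 + (1)*xb*x*y*w3*a1 + (-1)*xb*x*y*w*a2 + (1)*xb*x*y*w*a1 + (1)*xb*x*y*z*a2 + (-1)*xb*x*y^2*a1)*(Ecr a1 a2 xb yb x y) + ((-2)*z*w*z2*w3*a1 + (1)*z*w^2*z2*a1 + (1)*z^2*w*w3*a1 + (1)*y*z*z2*w3*a1 + (1)*y*z*w*w3*a2 + (-1)*y*z*w*z2*a2 + (1)*y*z*w*z2*a1 + (-1)*y*z^2*w*a1 + (-1)*y^2*z*z2*a1 + (1)*x*w*z2*w3*a1 + (-1)*x*z*w*w3*a2 + (1)*x*z*w*w3*a1 + (1)*x*z*w*z2*a2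 + (-1)*x*z*w^2*a1 + (-1)*x^2*w*w3*a1 + (-1)*yb*w*z2*w3*a2 + (1)*yb*z*z2*w3*a2 + (1)*yb*z*z2*w3*a1 + (-1)*yb*z*w*z2*a1 + (-1)*yb*z^2*w3*a1 + (-2)*yb*y*z*w3*a2 + (1)*yb*y*z^2*a1 + (1)*yb*y^2*z*a2 + (-1)*yb*x*z2*w3*a1 + (1)*yb*x*w*w3*a2 + (1)*yb*x*w*z2*a2 + (-1)*yb*x*w*z2*a1 + (1)*yb*x*z*w3*a2 + (-1)*yb*x*z*w3*a1 + (-1)*yb*x*z*z2*a2 + (1)*yb*x*z*w*a1 + (1)*yb*x^2*w3*a1 + (-1)*yb*x^2*w*a2 + (1)*yb*x^2*w*a1 + (1)*yb^2*y*z2*a2 + (-1)*yb^2*x*z2*a2 + (1)*yb^2*x*z2*a1 + (-1)*yb^2*x*y*a2 + (1)*yb^2*x^2*a2 + (-1)*yb^2*x^2*a1 + (1)*xb*w*z2*w3*a2 + (1)*xb*w*z2*w3*a1 + (-1)*xb*w^2*z2*a1 + (-1)*xb*z*z2*w3*a2 + (-1)*xb*z*w*w3*a1 + (-1)*xb*y*z2*w3*a1 + (-1)*xb*y*w*w3*a2 + (1)*xb*y*w*z2*a2 + (-1)*xb*y*w*z2*a1 + (1)*xb*y*z*w3*a2 + (-1)*xb*y*z*w3*a1 + (1)*xb*y*z*z2*a2 + (1)*xb*y*z*w*a1 + (1)*xb*y^2*z2*a1 + (-1)*xb*y^2*z*a2 + (1)*xb*y^2*z*a1 + (-2)*xb*x*w*z2*a2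 + (1)*xb*x*w^2*a1 + (1)*xb*x^2*w*a2 + (2)*xb*yb*w*z2*a1 + (2)*xb*yb*z*w3*a1 + (2)*xb*yb*y*w3*a2 + (-2)*xb*yb*y*z2*a2 + (-2)*xb*yb*y*z*a1 + (-1)*xb*yb*y^2*a2 + (-2)*xb*yb*x*w3*a2 + (2)*xb*yb*x*z2*a2 + (-2)*xb*yb*x*w*a1 + (2)*xb*yb*x*y*a2 + (-1)*xb*yb*x^2*a2 + (-1)*xb*yb^2*z2*a1 + (1)*xb*yb^2*x*a1 + (-1)*xb^2*y*w3*a2 + (1)*xb^2*y*w3*a1 + (1)*xb^2*y^2*a2 + (-1)*xb^2*y^2*a1 + (1)*xb^2*x*w3*a2 + (-1)*xb^2*x*y*a2 + (-1)*xb^2*yb*w3*a1 + (1)*xb^2*yb*y*a1)*(Ecr a1 a2 x y z w) + ((-1)*y^2*z*w*a2 + (2)*x*y*z*w*a2 + (-1)*x^2*z*w*a2 + (1)*yb*y^2*z*a2 + (-2)*yb*x*y*z*a2 + (1)*yb*x^2*z*a2 + (1)*xb*y^2*w*a2 + (-2)*xb*x*y*w*a2 + (1)*xb*x^2*w*a2 + (-1)*xb*yb*y^2*a2 + (2)*xb*yb*x*y*a2 + (-1)*xb*yb*x^2*a2)*(Ecr a1 a2 z w z2 w3)) by (unfold Ecr; ring).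
  rewrite He1, He2, He3 in HT.
  assert (HK : ((x-xb)*(x-z)/(z - xb) * (a1*(y-w) - a2*(z-w)) + (y-yb)*(y-w)/(w - yb) * (a1*(x-z) + a2*(z-w)) + (z-x)*(z-z2)/(z2 - x) * (- a1*(y-w) - a2*(x-y)) + (w-y)*(w-w3)/(w3 - y) * (- a1*(x-z) + a2*(x-y))) * (a1 * (z - xb)*(w - yb)*(z2 - x)*(w3 - y)) = a1 * ((x-xb)*(x-z)*(a1*(y-w) - a2*(z-w))*(w - yb)*(z2 - x)*(w3 - y) + (y-yb)*(y-w)*(a1*(x-z) + a2*(z-w))*(z - xb)*(z2 - x)*(w3 - y) + (z-x)*(z-z2)*(- a1*(y-w) - a2*(x-y))*(z - xb)*(w - yb)*(w3 - y) + (w-y)*(w-w3)*(- a1*(x-z) + a2*(x-y))*(z - xb)*(w - yb)*(z2 - x))) by (field; repeat split; assumption).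
  rewrite HT in HK.
  assert (Hnz : a1 * (z - xb)*(w - yb)*(z2 - x)*(w3 - y) <> 0) by (repeat (assumption || apply Rmult_integral_contrapositive_currified)).
  apply (Rmult_eq_reg_r (a1 * (z - xb)*(w - yb)*(z2 - x)*(w3 - y))); [|exact Hnz].
  rewrite HK; ring.
Qed.
Lemma symC (x y z w y2 w2 z2 w3 a1 a2 : R) :
  a1*a2 <> 0 -> y2 - x <> 0 -> w2 - z <> 0 -> z2 - x <> 0 -> w3 - y <> 0 -> Ecr a1 a2 x y z w = 0 -> Ecr a1 a2 y y2 w w2 = 0 -> Ecr a1 a2 z w z2 w3 = 0 ->
  (y-x)*(y-y2)/(y2 - x) * (a1*(x-z) + a2*(z-w)) + (w-z)*(w-w2)/(w2 - z) * (- a1*(x-z) + a2*(x-y)) + (z-x)*(z-z2)/(z2 - x) * (- a1*(y-w) - a2*(x-y)) + (w-y)*(w-w3)/(w3 - y) * (- a1*(x-z) + a2*(x-y)) = 0.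
Proof.
  intros Hf Hd1 Hd2 Hd3 Hd4 He1 He2 He3.
  assert (HT : (a1*a2) * ((y-x)*(y-y2)*(a1*(x-z) + a2*(z-w))*(w2 - z)*(z2 - x)*(w3 - y) + (w-z)*(w-w2)*(- a1*(x-z) + a2*(x-y))*(y2 - x)*(z2 - x)*(w3 - y) + (z-x)*(z-z2)*(- a1*(y-w) - a2*(x-y))*(y2 - x)*(w2 - z)*(w3 - y) + (w-y)*(w-w3)*(- a1*(x-z) + a2*(x-y))*(y2 - x)*(w2 - z)*(z2 - x)) = ((-3)*y2*w2*z2*w3*a1*a2 + (1)*w*y2*z2*w3*a1*a2 + (1)*w*y2*w2*z2*a1*a2 + (1)*z*w2*z2*w3*a1^2 + (2)*z*y2*z2*w3*a1*a2 + (-1)*z*y2*z2*w3*a1^2 + (1)*z*y2*w2*w3*a1*a2 + (-1)*z*w*y2*z2*a1*a2 + (-1)*z^2*y2*w3*a1*a2 + (1)*y*w2*z2*w3*a1*a2 + (1)*y*y2*w2*w3*a2^2 + (-1)*y*y2*w2*z2*a2^2 + (2)*y*y2*w2*z2*a1*a2 + (-1)*y*w*y2*z2*a1*a2 + (-1)*y*z*z2*w3*a1*a2 + (-1)*y*z*w2*z2*a1^2 + (-1)*y*z*y2*w3*a2^2 + (1)*y*z*y2*z2*a2^2 + (-1)*y*z*y2*z2*a1*a2 + (1)*y*z*y2*z2*a1^2 + (-1)*y*z*y2*w2*a1*a2 + (1)*y*z^2*y2*a1*a2 + (-1)*y^2*w2*z2*a1*a2 + (-1)*y^2*y2*w2*a2^2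 + (1)*y^2*w*w2*a1*a2 + (1)*y^2*w*y2*a2^2 + (-1)*y^2*w*y2*a1*a2 + (1)*y^2*z*z2*a1*a2 + (1)*y^3*w2*a2^2 + (-1)*y^3*w2*a1*a2 + (1)*y^3*y2*a1*a2 + (-1)*y^3*w*a2^2 + (2)*x*w2*z2*w3*a1*a2 + (-1)*x*w2*z2*w3*a1^2 + (1)*x*y2*z2*w3*a1^2 + (-1)*x*y2*w2*w3*a2^2 + (2)*x*y2*w2*w3*a1*a2 + (1)*x*y2*w2*z2*a2^2 + (-1)*x*w*z2*w3*a1*a2 + (-1)*x*w*w2*z2*a1*a2 + (-1)*x*w*y2*w3*a1*a2 + (-1)*x*w*y2*w2*a1*a2 + (-1)*x*z*z2*w3*a1*a2 + (-1)*x*z*w2*w3*a1*a2 + (-1)*x*z*w2*w3*a1^2 + (1)*x*z*y2*w3*a2^2 + (-1)*x*z*y2*w3*a1*a2 + (1)*x*z*y2*w3*a1^2 + (-1)*x*z*y2*z2*a2^2 + (1)*x*z*w*z2*a1*a2 + (1)*x*z*w*y2*a1*a2 + (1)*x*z^2*w3*a1*a2 + (-1)*x*y*w2*w3*a2^2 + (-1)*x*y*w2*w3*a1*a2 + (1)*x*y*w2*z2*a2^2 + (-1)*x*y*w2*z2*a1*a2 + (1)*x*y*w2*z2*a1^2 + (-1)*x*y*y2*z2*a1^2 + (2)*x*y*y2*w2*a2^2 + (-1)*x*y*y2*w2*a1*a2 + (1)*x*y*w*z2*a1*a2 + (-2)*x*y*w*w2*a1*a2 + (-2)*x*y*w*y2*a2^2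 + (3)*x*y*w*y2*a1*a2 + (1)*x*y*z*w3*a2^2 + (1)*x*y*z*w3*a1*a2 + (-1)*x*y*z*z2*a2^2 + (1)*x*y*z*w2*a1*a2 + (1)*x*y*z*w2*a1^2 + (-1)*x*y*z*y2*a1^2 + (-1)*x*y*z^2*a1*a2 + (-2)*x*y^2*w2*a2^2 + (3)*x*y^2*w2*a1*a2 + (-2)*x*y^2*y2*a1*a2 + (2)*x*y^2*w*a2^2 + (-1)*x*y^2*z*a1*a2 + (1)*x^2*w2*w3*a2^2 + (-1)*x^2*w2*w3*a1*a2 + (1)*x^2*w2*w3*a1^2 + (-1)*x^2*w2*z2*a2^2 + (-1)*x^2*y2*w3*a1^2 + (-1)*x^2*y2*w2*a2^2 + (1)*x^2*w*w3*a1*a2 + (2)*x^2*w*w2*a1*a2 + (1)*x^2*w*y2*a2^2 + (-1)*x^2*w*y2*a1*a2 + (-1)*x^2*z*w3*a2^2 + (1)*x^2*z*z2*a2^2 + (-1)*x^2*z*w*a1*a2 + (1)*x^2*y*w2*a2^2 + (-1)*x^2*y*w2*a1*a2 + (-1)*x^2*y*w2*a1^2 + (1)*x^2*y*y2*a1*a2 + (1)*x^2*y*y2*a1^2 + (-1)*x^2*y*w*a2^2 + (-1)*x^2*y*w*a1*a2 + (1)*x^2*y*z*a1*a2)*(Ecr a1 a2 x y z w) + ((-1)*z^2*z2*w3*a1^2 + (1)*y*z^2*z2*a1^2 + (1)*y^2*z2*w3*a1*a2 + (-1)*y^2*w*w3*a2^2 + (1)*y^2*w*z2*a2^2 + (-1)*y^2*w*z2*a1*a2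 + (1)*y^2*z*w3*a2^2 + (-1)*y^2*z*w3*a1*a2 + (-1)*y^2*z*z2*a2^2 + (1)*y^3*w*a2^2 + (-1)*y^3*z*a2^2 + (1)*y^3*z*a1*a2 + (2)*x*z*z2*w3*a1^2 + (1)*x*z^2*w3*a1^2 + (-2)*x*y*z2*w3*a1*a2 + (2)*x*y*w*w3*a2^2 + (-2)*x*y*w*z2*a2^2 + (2)*x*y*w*z2*a1*a2 + (-2)*x*y*z*w3*a2^2 + (2)*x*y*z*w3*a1*a2 + (2)*x*y*z*z2*a2^2 + (-2)*x*y*z*z2*a1^2 + (-1)*x*y*z^2*a1^2 + (-3)*x*y^2*w*a2^2 + (1)*x*y^2*w*a1*a2 + (3)*x*y^2*z*a2^2 + (-2)*x*y^2*z*a1*a2 + (-1)*x*y^3*a1*a2 + (1)*x^2*z2*w3*a1*a2 + (-1)*x^2*z2*w3*a1^2 + (-1)*x^2*w*w3*a2^2 + (1)*x^2*w*z2*a2^2 + (-1)*x^2*w*z2*a1*a2 + (1)*x^2*z*w3*a2^2 + (-1)*x^2*z*w3*a1*a2 + (-2)*x^2*z*w3*a1^2 + (-1)*x^2*z*z2*a2^2 + (1)*x^2*y*z2*a1^2 + (3)*x^2*y*w*a2^2 + (-2)*x^2*y*w*a1*a2 + (-3)*x^2*y*z*a2^2 + (1)*x^2*y*z*a1*a2 + (2)*x^2*y*z*a1^2 + (2)*x^2*y^2*a1*a2 + (1)*x^3*w3*a1^2 + (-1)*x^3*w*a2^2 + (1)*x^3*w*a1*a2 + (1)*x^3*z*a2^2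 + (-1)*x^3*y*a1*a2 + (-1)*x^3*y*a1^2)*(Ecr a1 a2 y y2 w w2) + ((-1)*y^2*w*w2*a1*a2 + (-1)*y^2*w*y2*a2^2 + (1)*y^2*w*y2*a1*a2 + (1)*y^2*z*y2*a2^2 + (-1)*y^3*w2*a2^2 + (1)*y^3*w2*a1*a2 + (-1)*y^3*y2*a1*a2 + (1)*y^3*w*a2^2 + (2)*x*y*w*w2*a1*a2 + (2)*x*y*w*y2*a2^2 + (-2)*x*y*w*y2*a1*a2 + (-2)*x*y*z*y2*a2^2 + (3)*x*y^2*w2*a2^2 + (-2)*x*y^2*w2*a1*a2 + (2)*x*y^2*y2*a1*a2 + (-2)*x*y^2*w*a2^2 + (-1)*x*y^2*z*a2^2 + (-1)*x^2*w*w2*a1*a2 + (-1)*x^2*w*y2*a2^2 + (1)*x^2*w*y2*a1*a2 + (1)*x^2*z*y2*a2^2 + (-3)*x^2*y*w2*a2^2 + (1)*x^2*y*w2*a1*a2 + (-1)*x^2*y*y2*a1*a2 + (1)*x^2*y*w*a2^2 + (2)*x^2*y*z*a2^2 + (1)*x^3*w2*a2^2 + (-1)*x^3*z*a2^2)*(Ecr a1 a2 z w z2 w3)) by (unfold Ecr; ring).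
  rewrite He1, He2, He3 in HT.
  assert (HK : ((y-x)*(y-y2)/(y2 - x) * (a1*(x-z) + a2*(z-w)) + (w-z)*(w-w2)/(w2 - z) * (- a1*(x-z) + a2*(x-y)) + (z-x)*(z-z2)/(z2 - x) * (- a1*(y-w) - a2*(x-y)) + (w-y)*(w-w3)/(w3 - y) * (- a1*(x-z) + a2*(x-y))) * ((a1*a2) * (y2 - x)*(w2 - z)*(z2 - x)*(w3 - y)) = (a1*a2) * ((y-x)*(y-y2)*(a1*(x-z) + a2*(z-w))*(w2 - z)*(z2 - x)*(w3 - y) + (w-z)*(w-w2)*(- a1*(x-z) + a2*(x-y))*(y2 - x)*(z2 - x)*(w3 - y) + (z-x)*(z-z2)*(- a1*(y-w) - a2*(x-y))*(y2 - x)*(w2 - z)*(w3 - y) + (w-y)*(w-w3)*(- a1*(x-z) + a2*(x-y))*(y2 - x)*(w2 - z)*(z2 - x))) by (field; repeat split; assumption).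
  rewrite HT in HK.
  assert (Hnz : (a1*a2) * (y2 - x)*(w2 - z)*(z2 - x)*(w3 - y) <> 0) by (repeat (assumption || apply Rmult_integral_contrapositive_currified)).
  apply (Rmult_eq_reg_r ((a1*a2) * (y2 - x)*(w2 - z)*(z2 - x)*(w3 - y))); [|exact Hnz].
  rewrite HK; ring.
Qed.
Lemma dQ1_eq a1 a2 a0 b0 x y z w : dQ1 a1 a2 a0 b0 x y z w = a1*(y-w-b0) - a2*(z-w-a0).
Proof. unfold dQ1, Qsk. apply is_derive_unique. auto_derive; [easy|ring]. Qed.
Lemma dQ2_eq a1 a2 a0 b0 x y z w : dQ2 a1 a2 a0 b0 x y z w = a1*(x-z-b0) + a2*(z-w-a0).
Proof. unfold dQ2, Qsk. apply is_derive_unique. auto_derive; [easy|ring]. Qed.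
Lemma dQ3_eq a1 a2 a0 b0 x y z w : dQ3 a1 a2 a0 b0 x y z w = - a1*(y-w-b0) - a2*(x-y-a0).
Proof. unfold dQ3, Qsk. apply is_derive_unique. auto_derive; [easy|ring]. Qed.
Lemma dQ4_eq a1 a2 a0 b0 x y z w : dQ4 a1 a2 a0 b0 x y z w = - a1*(x-z-b0) + a2*(x-y-a0).
Proof. unfold dQ4, Qsk. apply is_derive_unique. auto_derive; [easy|ring]. Qed.
Lemma Gsym_v a0 b0 u i j c l r b t s :
  u i j = c - s -> u (i-1)%Z j = l - s + a0 -> u (i+1)%Z j = r - s - a0 ->
  u i (j-1)%Z = b - s + b0 -> u i (j+1)%Z = t - s - b0 ->
  Gsym a0 b0 u i j = 4*IZR i*((c-l)*(c-r)/(r-l)) + 4*IZR j*((c-b)*(c-t)/(t-b)).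
Proof.
  intros H0 H1 H2 H3 H4. unfold Gsym, denN, denM. rewrite H0, H1, H2, H3, H4.
  replace (r - s - a0 - (l - s + a0) + 2 * a0) with (r - l) by ring.
  replace (t - s - b0 - (b - s + b0) + 2 * b0) with (t - b) by ring.
  unfold Rdiv; ring.
Qed.

Theorem mainTheorem4 (a1 a2 a0 b0 : R)
  (h1 : a1 <> 0) (h2 : a2 <> 0) (h0 : a0 <> 0) (hb : b0 <> 0)
  (hrel : a1 * b0 ^ 2 = a2 * a0 ^ 2)
  (u : Z -> Z -> R)
  (hsol : forall n m : Z,
      Qsk a1 a2 a0 b0 (u n m) (u (n + 1)%Z m) (u n (m + 1)%Z) (u (n + 1)%Z (m + 1)%Z) = 0)
  (n m : Z)
  (hden : forall i j : Z, (i = n \/ i = (n + 1)%Z) -> (j = m \/ j = (m + 1)%Z) ->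
      denN a0 u i j <> 0 /\ denM b0 u i j <> 0) :
  let x := u n m in
  let y := u (n + 1)%Z m in
  let z := u n (m + 1)%Z in
  let w := u (n + 1)%Z (m + 1)%Z in
  Gsym a0 b0 u n m * dQ1 a1 a2 a0 b0 x y z w
  + Gsym a0 b0 u (n + 1)%Z m * dQ2 a1 a2 a0 b0 x y z w
  + Gsym a0 b0 u n (m + 1)%Z * dQ3 a1 a2 a0 b0 x y z w
  + Gsym a0 b0 u (n + 1)%Z (m + 1)%Z * dQ4 a1 a2 a0 b0 x y z w = 0.
Proof.
  intros x y z w.
  pose (X := u n m). pose (Y := u (n+1)%Z m + a0). pose (Z := u n (m+1)%Z + b0).
  pose (W := u (n+1)%Z (m+1)%Z + a0 + b0).
  pose (XL := u (n-1)%Z m - a0). pose (ZL := u (n-1)%Z (m+1)%Z - a0 + b0).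
  pose (Y2 := u (n+1+1)%Z m + 2*a0). pose (W2 := u (n+1+1)%Z (m+1)%Z + 2*a0 + b0).
  pose (XB := u n (m-1)%Z - b0). pose (YB := u (n+1)%Z (m-1)%Z + a0 - b0).
  pose (Z2 := u n (m+1+1)%Z + 2*b0). pose (W3 := u (n+1)%Z (m+1+1)%Z + a0 + 2*b0).
  assert (q1 : dQ1 a1 a2 a0 b0 x y z w = a1*(Y-W) - a2*(Z-W))
    by (rewrite dQ1_eq; unfold x, y, z, w, Y, Z, W; ring).
  assert (q2 : dQ2 a1 a2 a0 b0 x y z w = a1*(X-Z) + a2*(Z-W))
    by (rewrite dQ2_eq; unfold x, y, z, w, X, Y, Z, W; ring).
  assert (q3 : dQ3 a1 a2 a0 b0 x y z w = - a1*(Y-W) - a2*(X-Y))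
    by (rewrite dQ3_eq; unfold x, y, z, w, X, Y, Z, W; ring).
  assert (q4 : dQ4 a1 a2 a0 b0 x y z w = - a1*(X-Z) + a2*(X-Y))
    by (rewrite dQ4_eq; unfold x, y, z, w, X, Y, Z, W; ring).
  rewrite q1, q2, q3, q4.
  rewrite (Gsym_v a0 b0 u n m X XL Y XB Z 0)
    by (unfold X, XL, Y, XB, Z; repeat rewrite Z.add_simpl_r; ring).
  rewrite (Gsym_v a0 b0 u (n+1)%Z m Y X Y2 YB W a0)
    by (unfold X, Y, Y2, YB, W; repeat rewrite Z.add_simpl_r; ring).
  rewrite (Gsym_v a0 b0 u n (m+1)%Z Z ZL W X Z2 b0)
    by (unfold X, Z, ZL, W, Z2; repeat rewrite Z.add_simpl_r; ring).
  rewrite (Gsym_v a0 b0 u (n+1)%Z (m+1)%Z W Z W2 Y W3 (a0+b0))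
    by (unfold Y, Z, W, W2, W3; repeat rewrite Z.add_simpl_r; ring).
  rewrite !plus_IZR.
  assert (E0 : Ecr a1 a2 X Y Z W = 0)
    by (rewrite <- (hsol n m); unfold Ecr, Qsk, X, Y, Z, W; ring).
  assert (EL : Ecr a1 a2 XL X ZL Z = 0).
  { pose proof (hsol (n-1)%Z m) as H. rewrite Z.sub_add in H. rewrite <- H.
    unfold Ecr, Qsk, X, XL, ZL, Z; ring. }
  assert (ER : Ecr a1 a2 Y Y2 W W2 = 0)
    by (rewrite <- (hsol (n+1)%Z m); unfold Ecr, Qsk, Y, Y2, W, W2; ring).
  assert (EB : Ecr a1 a2 XB YB X Y = 0).
  { pose proof (hsol n (m-1)%Z) as H. rewrite Z.sub_add in H. rewrite <- H.
    unfold Ecr, Qsk, X, Y, XB, YB; ring. }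
  assert (ET : Ecr a1 a2 Z W Z2 W3 = 0)
    by (rewrite <- (hsol n (m+1)%Z); unfold Ecr, Qsk, Z, W, Z2, W3; ring).
  destruct (hden n m (or_introl eq_refl) (or_introl eq_refl)) as [dn00 dm00].
  destruct (hden (n+1)%Z m (or_intror eq_refl) (or_introl eq_refl)) as [dn10 dm10].
  destruct (hden n (m+1)%Z (or_introl eq_refl) (or_intror eq_refl)) as [dn01 dm01].
  destruct (hden (n+1)%Z (m+1)%Z (or_intror eq_refl) (or_intror eq_refl)) as [dn11 dm11].
  assert (D1 : Y - XL <> 0) by (replace (Y - XL) with (denN a0 u n m) by (unfold denN, Y, XL; ring); exact dn00).
  assert (D2 : Y2 - X <> 0) by (replace (Y2 - X) with (denN a0 u (n+1)%Z m) by (unfold denN; rewrite Z.add_simpl_r; unfold Y2, X; ring); exact dn10).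
  assert (D3 : W - ZL <> 0) by (replace (W - ZL) with (denN a0 u n (m+1)%Z) by (unfold denN, W, ZL; ring); exact dn01).
  assert (D4 : W2 - Z <> 0) by (replace (W2 - Z) with (denN a0 u (n+1)%Z (m+1)%Z) by (unfold denN; rewrite Z.add_simpl_r; unfold W2, Z; ring); exact dn11).
  assert (D5 : Z - XB <> 0) by (replace (Z - XB) with (denM b0 u n m) by (unfold denM, Z, XB; ring); exact dm00).
  assert (D6 : W - YB <> 0) by (replace (W - YB) with (denM b0 u (n+1)%Z m) by (unfold denM, W, YB; ring); exact dm10).
  assert (D7 : Z2 - X <> 0) by (replace (Z2 - X) with (denM b0 u n (m+1)%Z) by (unfold denM; rewrite Z.add_simpl_r; unfold Z2, X; ring); exact dm01).
  assert (D8 : W3 - Y <> 0) by (replace (W3 - Y) with (denM b0 u (n+1)%Z (m+1)%Z) by (unfold denM; rewrite Z.add_simpl_r; unfold W3, Y; ring); exact dm11).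
  assert (h12 : a1 * a2 <> 0) by (apply Rmult_integral_contrapositive_currified; assumption).
  pose proof (symA XL X Y Y2 ZL Z W W2 a1 a2 h2 D1 D2 D3 D4 EL E0 ER) as HA.
  pose proof (symB XB YB X Y Z W Z2 W3 a1 a2 h1 D5 D6 D7 D8 EB E0 ET) as HB.
  pose proof (symC X Y Z W Y2 W2 Z2 W3 a1 a2 h12 D2 D4 D7 D8 E0 ER ET) as HC.
  clearbody X Y Z W XL ZL Y2 W2 XB YB Z2 W3.
  match type of HA with ?eA = 0 => match type of HB with ?eB = 0 => match type of HC with ?eC = 0 =>
    transitivity (4*IZR n*eA + 4*IZR m*eB + 4*eC); [ring | rewrite HA, HB, HC; ring] end end end.
Qed.
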